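(* Let $X$ be a locally finite poset with unique minimal element $0$ and let $f,g:X\to L$ satisfy $g(x)=\langle\bigoplus_{y\le x}f(y)\rangle^+_-$ for all $x\in X$. Then for every $x\in X$, either $|g(x)|\ge|g(y)|$ for all $y\prec x$, or $g(x)=\mathbb{O}$.
   Context: Let $(L^+,\le)$ be a totally ordered set with bottom $\mathbb{O}$ and top $\mathbb{1}$. Let $L^-=\{-a:a\in L^+\}$ be a disjoint copy with reversed order, $L=L^+\cup L^-$ with $-\mathbb{O}=\mathbb{O}$, totally ordered with $L^-$ below $L^+$; $-(-a)=a$; $|a|=a$ on $L^+$, $|a|=-a$ on $L^-$. Symmetric maximum: $a\oplus b=\mathbb{O}$ if $b=-a$, otherwise the one of $a,b$ with larger absolute value. For a finite family $(a_i)_{i\in I}$, the splitting rule gives $\langle\bigoplus_{i\in I}a_i\rangle^+_-:=\big(\bigvee_{a_i\ge\mathbb{O}}a_i\big)\oplus\big(\bigwedge_{a_i<\mathbb{O}}a_i\big)$ (empty sup/inf equal to $\mathbb{O}$); this equals $\bigoplus_{i}a_i$ (independent of parenthesization) when $|I|\le2$ or $\bigvee_ia_i\ne-\bigwedge_ia_i$, and $\mathbb{O}$ otherwise. Locally finite: every interval $[u,v]$ is finite. $y\prec x$ means $x$ covers $y$. *)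

(* Defs.v *)
From mathcomp Require Import all_boot all_order.
Set Implicit Arguments. Unset Strict Implicit. Unset Printing Implicit Defensive.
Import Order.TTheory.
Local Open Scope order_scope.

(* L^+ is a totally ordered set with bottom O (= \bot) and top 1 (= \top):
   T : tbOrderType d.  The symmetric extension L = L^+ u L^- is represented
   by pairs (sign, magnitude) with sign = true meaning "negative", subject to
   the invariant that a negative element has nonzero magnitude
   (so that -O = O is identified with O). *)
Section SymExt.
Context {d : Order.disp_t} (T : tbOrderType d).

Record symL := SymL { sgn : bool; mag : T; _ : sgn ==> (mag != \bot) }.

Lemma mkL_proof (s : bool) (a : T) : (s && (a != \bot)) ==> (a != \bot).
Proof. by case: s; case: (a != \bot). Qed.

(* element with sign s and magnitude a (sign dropped if a = O) *)
Definition mkL (s : bool) (a : T) : symL := SymL (mkL_proof s a).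

Definition zeroL : symL := mkL false \bot.
Definition oppL (x : symL) : symL := mkL (~~ sgn x) (mag x).
Definition absL (x : symL) : T := mag x.

Definition leL (x y : symL) : bool :=
  if sgn x then (if sgn y then mag y <= mag x else true)
  else (if sgn y then false else mag x <= mag y).

Definition eqL (x y : symL) : bool := (sgn x == sgn y) && (mag x == mag y).

Definition oplusL (a b : symL) : symL :=
  if eqL b (oppL a) then zeroL
  else if mag a < mag b then b else a.

Definition joinL (x y : symL) : symL := if leL x y then y else x.
Definition meetL (x y : symL) : symL := if leL x y then x else y.

(* splitting rule for a finite family given as a list:
   (sup of the a_i >= O) (+) (inf of the a_i < O), empty sup/inf = O *)
Definition supNonneg (s : seq symL) : symL :=
  foldr joinL zeroL [seq a <- s | leL zeroL a].
Definition infNeg (s : seq symL) : symL :=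
  foldr meetL zeroL [seq a <- s | ~~ leL zeroL a].
Definition splitSum (s : seq symL) : symL := oplusL (supNonneg s) (infNeg s).

End SymExt.

Section Poset.
Context {d : Order.disp_t} (X : porderType d).

Definition locally_finite : Prop :=
  forall u v : X, exists s : seq X, forall z, (z \in s) = (u <= z <= v).

Definition covers (y x : X) : Prop :=
  y < x /\ forall z : X, ~ (y < z /\ z < x).

End Poset.

(* Main.v *)
Require Import Defs.
From mathcomp Require Import all_boot all_order.
Import Order.TTheory.
Local Open Scope order_scope.

Section Aux.
Context {dL : Order.disp_t} (T : tbOrderType dL).

Lemma leL0 (a : symL T) : leL (zeroL T) a = ~~ sgn a.
Proof. by rewrite /leL /=; case: (sgn a) => //; rewrite le0x. Qed.

Lemma sup_nonneg (s : seq (symL T)) : sgn (supNonneg s) = false.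
Proof.
rewrite /supNonneg; elim: s => [|a s IH] //=.
case: ifP => //= Ha; rewrite /joinL; case: ifP => //.
by rewrite leL0 in Ha; move/negbTE: Ha.
Qed.

Lemma sup_le (s : seq (symL T)) (m : T) :
  (mag (supNonneg s) <= m) = all (fun a => leL (zeroL T) a ==> (mag a <= m)) s.
Proof.
elim: s => [|a s IH]; first by rewrite /supNonneg /= le0x.
rewrite /= -IH /supNonneg /=.
case: ifP => Ha //=.
have Hr := sup_nonneg s; rewrite /supNonneg in Hr.
set r := foldr _ _ _ in Hr *.
rewrite leL0 in Ha; move/negbTE: Ha => Ha.
rewrite /joinL /leL Ha Hr.
case: ifP => H.
  apply/idP/andP => [Hm|[]//]; split => //; exact: le_trans H Hm.
move/negbT: H; rewrite -ltNge => H.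
apply/idP/andP => [Hm|[]//]; split => //; exact: le_trans (ltW H) Hm.
Qed.

Lemma inf_inv (s : seq (symL T)) :
  sgn (infNeg s) || (mag (infNeg s) == \bot).
Proof.
rewrite /infNeg; elim: s => [|a s IH] //=.
case: ifP => //= Ha; rewrite /meetL; case: ifP => // _.
by rewrite leL0 negbK in Ha; rewrite Ha.
Qed.

Lemma inf_le (s : seq (symL T)) (m : T) :
  (mag (infNeg s) <= m) = all (fun a => ~~ leL (zeroL T) a ==> (mag a <= m)) s.
Proof.
elim: s => [|a s IH]; first by rewrite /infNeg /= le0x.
rewrite /= -IH /infNeg /=.
case: ifP => Ha //=.
have Hr := inf_inv s; rewrite /infNeg in Hr.
set r := foldr _ _ _ in Hr *.
rewrite leL0 negbK in Ha.
rewrite /meetL /leL Ha.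
case Hs: (sgn r) => /=.
- case: ifP => H.
    apply/idP/andP => [Hm|[]//]; split => //; exact: le_trans H Hm.
  move/negbT: H; rewrite -ltNge => H.
  apply/idP/andP => [Hm|[]//]; split => //; exact: le_trans (ltW H) Hm.
- rewrite Hs /= in Hr; rewrite (eqP Hr) le0x andbT //.
Qed.

Lemma oplus_mag (a b : symL T) :
  oplusL a b = zeroL T \/
  (mag a <= mag (oplusL a b) /\ mag b <= mag (oplusL a b)).
Proof.
rewrite /oplusL; case: ifP => _; first by left.
right; case: ifP => H; first by split => //; exact: ltW.
by move/negbT: H; rewrite -leNgt.
Qed.

Lemma oplus_le (a b : symL T) (m : T) :
  mag a <= m -> mag b <= m -> mag (oplusL a b) <= m.
Proof.
rewrite /oplusL; case: ifP => _ ?? /=; first by rewrite le0x.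
by case: ifP.
Qed.

End Aux.
Arguments oplus_mag {dL T}.
Arguments oplus_le {dL T}.
Arguments sup_le {dL T}.
Arguments inf_le {dL T}.

Theorem proposition5
  (dL : Order.disp_t) (T : tbOrderType dL)
  (dX : Order.disp_t) (X : porderType dX) (x0 : X)
  (hlf : locally_finite X)
  (h0 : forall x : X, x0 <= x)
  (f g : X -> symL T)
  (hg : forall (x : X) (s : seq X),
          (forall y, (y \in s) = (y <= x)) ->
          g x = splitSum [seq f y | y <- s]) :
  forall x : X,
    (forall y : X, covers y x -> absL (g y) <= absL (g x))
    \/ g x = zeroL T.
Proof.
have hs : forall x : X, exists s : seq X, forall y, (y \in s) = (y <= x).
  move=> x; have [s Hs] := hlf x0 x; exists s => y; by rewrite Hs h0.
move=> x; have [sx Hx] := hs x.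
have Egx := hg x sx Hx.
have [H0|[HP HN]] := oplus_mag (supNonneg [seq f y | y <- sx])
                                 (infNeg [seq f y | y <- sx]).
  by right; rewrite Egx; exact: H0.
left => y [Hyx _]; have [sy Hy] := hs y.
rewrite /absL (hg y sy Hy) Egx /splitSum.
have sub : forall z, z \in sy -> z \in sx.
  by move=> z; rewrite Hy Hx => Hz; exact: le_trans Hz (ltW Hyx).
apply: oplus_le.
- rewrite sup_le all_map; apply/allP => z /sub Hz /=.
  move: HP; rewrite sup_le all_map => /allP /(_ z Hz) //.
- rewrite inf_le all_map; apply/allP => z /sub Hz /=.
  move: HN; rewrite inf_le all_map => /allP /(_ z Hz) //.
Qed.
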